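(* Let $M,N$ be complete pointed metric spaces and $f\colon M\to N$ a Lipschitz map with $f(0_M)=0_N$. If $\widehat f\colon\mathcal F(M)\to\mathcal F(N)$ is compact, then $$\lim_{d(x,y)\to+\infty}\frac{d(f(x),f(y))}{d(x,y)}=0,$$ i.e. for every $\varepsilon>0$ there is $R>0$ such that $d(f(x),f(y))\le\varepsilon d(x,y)$ whenever $d(x,y)\ge R$.
   Context: Scalars are $\mathbb K=\mathbb R$ or $\mathbb C$. For a pointed metric space $(M,d,0_M)$, $\mathrm{Lip}_0(M)$ denotes the Banach space of Lipschitz functions $g\colon M\to\mathbb K$ with $g(0_M)=0$ normed by the best Lipschitz constant; $\delta(x)\in\mathrm{Lip}_0(M)^*$ is evaluation at $x$; the Lipschitz-free space $\mathcal F(M)$ is the norm-closed linear span of $\{\delta(x):x\in M\}$ in $\mathrm{Lip}_0(M)^*$. For a Lipschitz map $f\colon M\to N$ with $f(0_M)=0_N$, $\widehat f\colon\mathcal F(M)\to\mathcal F(N)$ is the unique bounded linear operator with $\widehat f(\delta(x))=\delta(f(x))$ for all $x\in M$. *)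

(* Defs.v *)
From Stdlib Require Import Reals List.
From Coquelicot Require Import Coquelicot.
Open Scope R_scope.

Record PointedMetricSpace := {
  pm_carrier :> Type;
  pm_dist : pm_carrier -> pm_carrier -> R;
  pm_base : pm_carrier;
  pm_dist_eq0 : forall x y, pm_dist x y = 0 <-> x = y;
  pm_dist_sym : forall x y, pm_dist x y = pm_dist y x;
  pm_dist_tri : forall x y z, pm_dist x z <= pm_dist x y + pm_dist y z
}.
Arguments pm_dist {p} _ _.

Definition Complete (M : PointedMetricSpace) : Prop :=
  forall u : nat -> M,
    (forall eps, 0 < eps -> exists n0, forall m n, (n0 <= m)%nat -> (n0 <= n)%nat ->
        pm_dist (u m) (u n) < eps) ->
    exists l : M, forall eps, 0 < eps -> exists n0, forall n, (n0 <= n)%nat ->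
        pm_dist (u n) l < eps.

(** Scalars: K = R (cplx = false) or K = C (cplx = true), both realised inside
    Coquelicot's C; in the real case a scalar is a complex number with zero
    imaginary part. *)
Definition IsScalar (cplx : bool) (a : C) : Prop :=
  if cplx then True else Im a = 0.

Definition Lipschitz {M N : PointedMetricSpace} (f : M -> N) : Prop :=
  exists L, forall x y, pm_dist (f x) (f y) <= L * pm_dist x y.

Definition LipLe {M : PointedMetricSpace} (g : M -> C) (c : R) : Prop :=
  forall x y, Cmod (Cminus (g x) (g y)) <= c * pm_dist x y.

Definition Lip0 (cplx : bool) {M : PointedMetricSpace} (g : M -> C) : Prop :=
  g (pm_base M) = RtoC 0 /\ (exists L, LipLe g L) /\ (forall x, IsScalar cplx (g x)).

(** (Representatives of) functionals on Lip_0(M); only their values on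
    Lip_0(M) matter. *)
Definition Functional (M : PointedMetricSpace) := (M -> C) -> C.

Definition delta {M : PointedMetricSpace} (x : M) : Functional M := fun g => g x.

Definition comb {M : PointedMetricSpace} (l : list (C * M)) : Functional M :=
  fun g => fold_right (fun p acc => Cplus (Cmult (fst p) (g (snd p))) acc) (RtoC 0) l.

Definition fsub {M : PointedMetricSpace} (P Q : Functional M) : Functional M :=
  fun g => Cminus (P g) (Q g).

Definition DualNormLe (cplx : bool) {M : PointedMetricSpace} (P : Functional M) (c : R) : Prop :=
  forall g : M -> C, Lip0 cplx g -> LipLe g 1 -> Cmod (P g) <= c.

(** The Lipschitz-free space F(M): the norm closure in Lip_0(M)^* of the
    K-linear span of the evaluations delta(x). *)
Definition FreeSpace (cplx : bool) (M : PointedMetricSpace) (P : Functional M) : Prop :=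
  forall eps, 0 < eps -> exists l : list (C * M),
    List.Forall (fun p => IsScalar cplx (fst p)) l /\ DualNormLe cplx (fsub P (comb l)) eps.

(** T is a bounded K-linear operator F(M) -> F(N) (equality in F(N) being
    equality on Lip_0(N)). *)
Definition BoundedLinearOp (cplx : bool) (M N : PointedMetricSpace)
    (T : Functional M -> Functional N) : Prop :=
  (forall P, FreeSpace cplx M P -> FreeSpace cplx N (T P)) /\
  (forall (a : C) (P Q : Functional M), IsScalar cplx a ->
     FreeSpace cplx M P -> FreeSpace cplx M Q ->
     forall h : N -> C, Lip0 cplx h ->
       T (fun g => Cplus (Cmult a (P g)) (Q g)) h = Cplus (Cmult a (T P h)) (T Q h)) /\
  (exists K0, 0 <= K0 /\ forall P c, FreeSpace cplx M P -> DualNormLe cplx P c ->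
       DualNormLe cplx (T P) (K0 * c)).

Definition CompactOp (cplx : bool) (M N : PointedMetricSpace)
    (T : Functional M -> Functional N) : Prop :=
  forall u : nat -> Functional M,
    (forall n, FreeSpace cplx M (u n) /\ DualNormLe cplx (u n) 1) ->
    exists (phi : nat -> nat) (Q : Functional N),
      (forall n, (phi n < phi (S n))%nat) /\ FreeSpace cplx N Q /\
      forall eps, 0 < eps -> exists n0, forall n, (n0 <= n)%nat ->
        DualNormLe cplx (fsub (T (u (phi n))) Q) eps.

(* Main.v *)
Require Import Defs.
From Stdlib Require Import Reals List.
From Coquelicot Require Import Coquelicot.
From Stdlib Require Import Lra Lia ZArith Classical ClassicalEpsilon.
Open Scope R_scope.

Lemma arch_nat (r : R) : exists n : nat, r < INR n.
Proof.
  destruct (archimed r) as [H1 _].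
  exists (Z.to_nat (up r)).
  destruct (Z_lt_le_dec (up r) 0) as [Hz|Hz].
  - replace (Z.to_nat (up r)) with 0%nat by lia. simpl. apply IZR_lt in Hz. lra.
  - rewrite INR_IZR_INZ, Z2Nat.id by lia. lra.
Qed.

Lemma scal_R (cplx : bool) (r : R) : IsScalar cplx (RtoC r).
Proof. destruct cplx; simpl; auto. Qed.

Lemma scal_RR (cplx : bool) (r s : R) : IsScalar cplx (Cmult (RtoC r) (RtoC s)).
Proof. destruct cplx; simpl; auto. ring. Qed.

Lemma freespace_comb (cplx : bool) (M : PointedMetricSpace) (P : Functional M)
  (l : list (C * M)) :
  (forall g, P g = comb l g) -> List.Forall (fun p => IsScalar cplx (fst p)) l ->
  FreeSpace cplx M P.
Proof.
  intros H Hl eps Heps. exists l. split; auto.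
  intros g _ _. unfold fsub. rewrite H.
  replace (Cminus (comb l g) (comb l g)) with (RtoC 0) by ring.
  rewrite Cmod_0; lra.
Qed.

Lemma comb_zero (M : PointedMetricSpace) (l : list (C * M)) (h : M -> C) :
  (forall p, In p l -> h (snd p) = RtoC 0) -> comb l h = RtoC 0.
Proof.
  induction l as [|p l IH]; intros H; simpl; [reflexivity|].
  unfold comb in IH |- *. simpl. rewrite IH by (intros; apply H; simpl; auto).
  rewrite (H p) by (simpl; auto). ring.
Qed.

Definition sumd {N : PointedMetricSpace} (l : list (C * N)) : R :=
  fold_right (fun p acc => pm_dist (snd p) (pm_base N) + acc) 0 l.

Lemma dist_nonneg (N : PointedMetricSpace) (x y : N) : 0 <= pm_dist x y.
Proof.
  pose proof (pm_dist_tri N x y x). rewrite (pm_dist_sym N y x) in H.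
  assert (pm_dist x x = 0) by (apply pm_dist_eq0; auto). lra.
Qed.

Lemma dist_refl (N : PointedMetricSpace) (x : N) : pm_dist x x = 0.
Proof. apply pm_dist_eq0; auto. Qed.

Lemma sumd_nonneg (N : PointedMetricSpace) (l : list (C * N)) : 0 <= sumd l.
Proof.
  induction l; unfold sumd in *; simpl; [lra|]. pose proof (dist_nonneg N (snd a) (pm_base N)). lra.
Qed.

Lemma sumd_ge (N : PointedMetricSpace) (l : list (C * N)) p :
  In p l -> pm_dist (snd p) (pm_base N) <= sumd l.
Proof.
  induction l as [|q l IH]; unfold sumd in *; simpl; [tauto|]. intros [->|H].
  - pose proof (sumd_nonneg N l). unfold sumd in H. lra.
  - pose proof (IH H). pose proof (dist_nonneg N (snd q) (pm_base N)). unfold sumd in *. lra.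
Qed.

Lemma bump (cplx : bool) (N : PointedMetricSpace) (l : list (C * N)) (c c' : N) :
  0 <= pm_dist c (pm_base N) - sumd l ->
  exists h : N -> C, Lip0 cplx h /\ LipLe h 1 /\ comb l h = RtoC 0 /\
    Rmin (pm_dist c (pm_base N) - sumd l) (pm_dist c c') <= Cmod (Cminus (h c) (h c')).
Proof.
  intros Hr. set (rho := pm_dist c (pm_base N) - sumd l) in *.
  pose proof (sumd_nonneg N l) as HD.
  exists (fun z => RtoC (Rmax 0 (rho - pm_dist z c))).
  assert (Lp : forall x y, Rabs (Rmax 0 (rho - pm_dist x c) - Rmax 0 (rho - pm_dist y c))
                 <= pm_dist x y).
  { intros x y. pose proof (pm_dist_tri N x y c). pose proof (pm_dist_tri N y x c).
    rewrite (pm_dist_sym N y x) in H0.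
    unfold Rmax; repeat destruct Rle_dec; apply Rabs_le; split; lra. }
  split; [|split; [|split]].
  - split; [|split].
    + f_equal. rewrite pm_dist_sym. unfold rho. unfold Rmax; destruct Rle_dec; lra.
    + exists 1. intros x y. rewrite <- RtoC_minus, Cmod_R. rewrite Rmult_1_l. apply Lp.
    + intros; apply scal_R.
  - intros x y. rewrite <- RtoC_minus, Cmod_R. rewrite Rmult_1_l. apply Lp.
  - apply comb_zero. intros p Hp. f_equal.
    pose proof (sumd_ge N l p Hp). pose proof (pm_dist_tri N c (snd p) (pm_base N)).
    rewrite (pm_dist_sym N c (snd p)) in H0. unfold rho.
    unfold Rmax; destruct Rle_dec; lra.
  - rewrite <- RtoC_minus, Cmod_R, dist_refl, (pm_dist_sym N c' c).
    pose proof (dist_nonneg N c c').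
    unfold Rmin, Rmax; repeat destruct Rle_dec; rewrite Rabs_right; lra.
Qed.

Theorem mainTheorem9 (cplx : bool) (M N : PointedMetricSpace)
  (HM : Complete M) (HN : Complete N)
  (f : M -> N) (Hf : Lipschitz f) (Hf0 : f (pm_base M) = pm_base N)
  (T : Functional M -> Functional N)
  (HT : BoundedLinearOp cplx M N T)
  (HTdelta : forall (x : M) (h : N -> C), Lip0 cplx h -> T (delta x) h = delta (f x) h)
  (HTc : CompactOp cplx M N T) :
  forall eps, 0 < eps -> exists R0, 0 < R0 /\
    forall x y : M, R0 <= pm_dist x y -> pm_dist (f x) (f y) <= eps * pm_dist x y.
Proof.
  intros eps Heps. apply NNPP; intro Hno.
  assert (Hex : forall n : nat, exists xy : M * M,
    INR n + 1 <= pm_dist (fst xy) (snd xy) /\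
    eps * pm_dist (fst xy) (snd xy) < pm_dist (f (fst xy)) (f (snd xy))).
  { intro n. apply NNPP; intro Hn. apply Hno. exists (INR n + 1).
    split; [pose proof (pos_INR n); lra|].
    intros x y Hxy. apply Rnot_lt_le. intro Hlt. apply Hn. exists (x, y). simpl. auto. }
  set (xy := fun n => proj1_sig (constructive_indefinite_description _ (Hex n))).
  assert (Hxy : forall n, INR n + 1 <= pm_dist (fst (xy n)) (snd (xy n)) /\
    eps * pm_dist (fst (xy n)) (snd (xy n)) < pm_dist (f (fst (xy n))) (f (snd (xy n)))).
  { intro n. unfold xy. exact (proj2_sig (constructive_indefinite_description _ (Hex n))). }
  clearbody xy.
  set (x := fun n => fst (xy n)). set (y := fun n => snd (xy n)).
  set (dn := fun n => pm_dist (x n) (y n)).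
  assert (Hdn : forall n, INR n + 1 <= dn n) by (intro n; apply Hxy).
  assert (Hdpos : forall n, 0 < dn n) by (intro n; pose proof (pos_INR n); pose proof (Hdn n); lra).
  destruct HT as [_ [Hlin _]].
  set (Dm := fun n => fun g : M -> C => Cplus (Cmult (RtoC (-1)) (delta (y n) g)) (delta (x n) g)).
  set (u := fun n => fun g : M -> C =>
     Cplus (Cmult (RtoC (/ dn n)) (Dm n g)) (delta (pm_base M) g)).
  assert (FSd : forall z : M, FreeSpace cplx M (delta z)).
  { intro z. apply (freespace_comb _ _ _ ((RtoC 1, z) :: nil)).
    - intro g. unfold comb, delta; simpl. ring.
    - repeat constructor; apply scal_R. }
  assert (FSD : forall n, FreeSpace cplx M (Dm n)).
  { intro n. apply (freespace_comb _ _ _ ((RtoC (-1), y n) :: (RtoC 1, x n) :: nil)).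
    - intro g. unfold Dm, comb, delta; simpl. ring.
    - repeat constructor; apply scal_R. }
  assert (Tval : forall n h, Lip0 cplx h ->
     T (u n) h = Cmult (RtoC (/ dn n)) (Cminus (h (f (x n))) (h (f (y n))))).
  { intros n h Hh.
    assert (E1 : T (u n) h = Cplus (Cmult (RtoC (/ dn n)) (T (Dm n) h)) (T (delta (pm_base M)) h))
      by exact (Hlin _ _ _ (scal_R _ _) (FSD n) (FSd _) h Hh).
    assert (E2 : T (Dm n) h = Cplus (Cmult (RtoC (-1)) (T (delta (y n)) h)) (T (delta (x n)) h))
      by exact (Hlin _ _ _ (scal_R _ _) (FSd _) (FSd _) h Hh).
    rewrite E1, E2, !HTdelta by exact Hh. unfold delta. rewrite Hf0.
    destruct Hh as [Hh0 _]. rewrite Hh0. ring. }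
  assert (Hu : forall n, FreeSpace cplx M (u n) /\ DualNormLe cplx (u n) 1).
  { intro n. split.
    - apply (freespace_comb _ _ _ ((Cmult (RtoC (/ dn n)) (RtoC (-1)), y n)
         :: (Cmult (RtoC (/ dn n)) (RtoC 1), x n) :: (RtoC 1, pm_base M) :: nil)).
      + intro g. unfold u, Dm, comb, delta; simpl. ring.
      + repeat constructor; simpl; first [apply scal_RR | apply scal_R].
    - intros g [Hg0 _] HL. unfold u, Dm, delta. rewrite Hg0.
      replace (Cplus (Cmult (RtoC (/ dn n)) (Cplus (Cmult (RtoC (-1)) (g (y n))) (g (x n)))) (RtoC 0))
        with (Cmult (RtoC (/ dn n)) (Cminus (g (x n)) (g (y n)))) by ring.
      rewrite Cmod_mult, Cmod_R. specialize (HL (x n) (y n)).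
      pose proof (Hdpos n). rewrite Rabs_right by (apply Rle_ge; left; apply Rinv_0_lt_compat; lra).
      apply Rle_trans with (/ dn n * (1 * dn n)).
      + apply Rmult_le_compat_l; [left; apply Rinv_0_lt_compat; lra| exact HL].
      + right. field. lra. }
  destruct (HTc u Hu) as [phi [Q [Hphi [HQ Hconv]]]].
  assert (Hphi_ge : forall n, (n <= phi n)%nat).
  { induction n; [lia|]. specialize (Hphi n). lia. }
  destruct (HQ (eps / 8)) as [l [_ HQl]]; [lra|].
  destruct (Hconv (eps / 8)) as [n0 Hn0]; [lra|].
  set (D := sumd l). pose proof (sumd_nonneg N l) as HD0. fold D in HD0.
  destruct (arch_nat (4 * D / eps)) as [N1 HN1].
  set (n := Nat.max n0 N1). set (k := phi n).
  assert (Hk : (n <= k)%nat) by apply Hphi_ge.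
  assert (Hbig : 4 * D < eps * dn k).
  { pose proof (le_INR _ _ Hk). pose proof (le_INR N1 n ltac:(lia)).
    pose proof (Hdn k).
    assert (4 * D / eps < dn k) by lra.
    apply (Rmult_lt_compat_l eps) in H2; [|lra].
    replace (eps * (4 * D / eps)) with (4 * D) in H2 by (field; lra). lra. }
  set (a := f (x k)). set (b := f (y k)).
  set (e := pm_dist a b).
  assert (He : eps * dn k < e) by apply Hxy.
  assert (Hh : exists h : N -> C, Lip0 cplx h /\ LipLe h 1 /\ comb l h = RtoC 0 /\
     (e - 2 * D) / 2 <= Cmod (Cminus (h a) (h b))).
  { pose proof (pm_dist_tri N a (pm_base N) b) as Htri.
    rewrite (pm_dist_sym N (pm_base N) b) in Htri. fold e in Htri.
    destruct (Rle_dec (pm_dist b (pm_base N)) (pm_dist a (pm_base N))) as [Hab|Hab].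
    - destruct (bump cplx N l a b) as [h [H1 [H2 [H3 H4]]]]; [fold D; lra|].
      exists h. split; [exact H1|split;[exact H2|split;[exact H3|]]]. fold D e in H4.
      eapply Rle_trans; [|exact H4]. unfold Rmin; destruct Rle_dec; lra.
    - destruct (bump cplx N l b a) as [h [H1 [H2 [H3 H4]]]]; [fold D; lra|].
      exists h. split; [exact H1|split;[exact H2|split;[exact H3|]]]. fold D in H4. rewrite (pm_dist_sym N b a) in H4. fold e in H4.
      replace (Cminus (h a) (h b)) with (Copp (Cminus (h b) (h a))) by ring.
      rewrite Cmod_opp.
      eapply Rle_trans; [|exact H4]. unfold Rmin; destruct Rle_dec; lra. }
  destruct Hh as [h [Hh0 [Hh1 [Hh2 Hh3]]]].
  assert (Hlow : eps / 4 < Cmod (T (u k) h)).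
  { rewrite Tval by exact Hh0. rewrite Cmod_mult, Cmod_R.
    pose proof (Hdpos k).
    rewrite Rabs_right by (apply Rle_ge; left; apply Rinv_0_lt_compat; lra).
    apply Rle_lt_trans with (/ dn k * (eps * dn k / 4)).
    - right. field. lra.
    - apply Rmult_lt_compat_l; [apply Rinv_0_lt_compat; lra|]. fold a b. lra. }
  assert (Hup : Cmod (T (u k) h) <= eps / 4).
  { replace (T (u k) h) with (Cplus (fsub (T (u k)) Q h) (Cplus (fsub Q (comb l) h) (comb l h)))
      by (unfold fsub; ring).
    rewrite Hh2. eapply Rle_trans; [apply Cmod_triangle|].
    eapply Rle_trans; [apply Rplus_le_compat_l, Cmod_triangle|].
    rewrite Cmod_0.
    pose proof (Hn0 n ltac:(lia) h Hh0 Hh1). pose proof (HQl h Hh0 Hh1).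
    fold k in H. lra. }
  lra.
Qed.
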